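(* Let $1\leq k\leq n$ and let $\Lambda_1,\dots,\Lambda_d\subset\mathbb{P}^n$ be $(k-1)$-dimensional linear subspaces satisfying $\mathrm{SP}(n-k)$. Let $2\leq r\leq\min\{d-2,\,n-k+1\}$ be an integer such that for a general point $p\in\Lambda_d$ (i.e. for all $p$ in a nonempty Zariski open subset of $\Lambda_d$) one has $p\notin\Lambda_i$ for $i=1,\dots,r$, and the $(k-1)$-planes $\Gamma_i:=\pi_p(\Lambda_i)\subset\mathbb{P}^{n-1}$, $i=1,\dots,r$, satisfy $\mathrm{SP}(n-k-1)$, where $\pi_p\colon\mathbb{P}^n\dashrightarrow\mathbb{P}^{n-1}$ is the projection from $p$. Then one of the following holds: (A) $\Lambda_d\subset\mathrm{Span}(\Lambda_1,\dots,\Lambda_r)$; (B) $\Lambda_1,\dots,\Lambda_r$ satisfy $\mathrm{SP}(n-k)$.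
   Context: For $(k-1)$-dimensional linear subspaces $\Lambda_1,\dots,\Lambda_e\subset\mathbb{P}^N$ (not necessarily distinct), $\mathrm{SP}(N-k)$ means: for every $j\in\{1,\dots,e\}$ and every $(N-k)$-dimensional linear subspace $L\subset\mathbb{P}^N$ meeting each $\Lambda_i$ with $i\neq j$, $L$ also meets $\Lambda_j$. *)

(* Defs.v *)
From HB Require Import structures.
From mathcomp Require Import all_boot all_order all_algebra.
From mathcomp Require Import mpoly.
Set Implicit Arguments. Unset Strict Implicit. Unset Printing Implicit Defensive.
Import Order.TTheory GRing.Theory Num.Theory.
Local Open Scope ring_scope.

(* Projective space P^{V-1} over K = lines in K^V = 'rV[K]_V.
   A linear subspace of P^{V-1} of projective dimension m is the row space
   of a matrix A with \rank A = m+1.  A point is a nonzero row vector. *)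

Definition meets (K : fieldType) (V m1 m2 : nat)
  (L : 'M[K]_(m1, V)) (A : 'M[K]_(m2, V)) : Prop :=
  (L :&: A)%MS != 0.

Definition SP (K : fieldType) (V mr : nat) (m e : nat)
  (Lam : nat -> 'M[K]_(mr, V)) : Prop :=
  forall j, (1 <= j <= e)%N ->
  forall L : 'M[K]_V, \rank L = m.+1 ->
    (forall i, (1 <= i <= e)%N -> i != j -> meets L (Lam i)) ->
    meets L (Lam j).

Definition ev (K : fieldType) (V : nat) (f : {mpoly K[V]}) (v : 'rV[K]_V) : K :=
  f.@[fun i => v 0 i].

(* "A property Q holds for a general point p of the projective subspace
   spanned by the rows of A": Q holds at every point of a nonempty Zariski
   open subset of that subspace.  Nonempty Zariski opens contain nonempty
   basic opens {[v] : f(v) <> 0} with f homogeneous, so it suffices to say: *)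
Definition general_in (K : fieldType) (V mr : nat) (A : 'M[K]_(mr, V))
  (Q : 'rV[K]_V -> Prop) : Prop :=
  exists (dg : nat) (f : {mpoly K[V]}),
    f \is dg.-homog /\
    (exists v : 'rV[K]_V, (v <= A)%MS /\ v != 0 /\ ev f v != 0) /\
    (forall p : 'rV[K]_V, (p <= A)%MS -> p != 0 -> ev f p != 0 -> Q p).

(* P : K^{n+1} -> K^n (acting on row vectors) is a linear projection from
   the point p, i.e. its kernel is exactly the line spanned by p;
   it induces pi_p : P^n --> P^{n-1}. *)
Definition proj_from (K : fieldType) (n : nat) (p : 'rV[K]_n.+1)
  (P : 'M[K]_(n.+1, n)) : Prop :=
  (kermx P == p)%MS.

(* Main.v *)
Require Import Defs.
From HB Require Import structures.
From mathcomp Require Import all_boot all_order all_algebra.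
From mathcomp Require Import mpoly zify.
Import Order.TTheory GRing.Theory Num.Theory.
Set Implicit Arguments. Unset Strict Implicit. Unset Printing Implicit Defensive.
Local Open Scope ring_scope.

Lemma line_poly (K : fieldType) (N : nat) (f : {mpoly K[N]}) (a b : 'I_N -> K) :
  exists g : {poly K}, forall t, g.[t] = f.@[fun i => a i + t * b i].
Proof.
exists (\sum_(m <- msupp f) (f@_m)%:P * \prod_i ((a i)%:P + (b i)%:P * 'X) ^+ m i).
move=> t; rewrite mevalE horner_sum; apply: eq_bigr => m _.
rewrite hornerM hornerC horner_prod; congr (_ * _); apply: eq_bigr => i _.
by rewrite horner_exp hornerD hornerC hornerM hornerC hornerX mulrC.
Qed.

Lemma nonroot (K : fieldType) (hK : [pchar K] =i pred0) (g : {poly K}) :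
  g != 0 -> exists t : K, t != 0 /\ g.[t] != 0.
Proof.
move=> g0.
set rs := [seq (i.+1)%:R : K | i <- iota 0 (size g)].
have [/allP|] := boolP (all (root g) rs).
  move=> H; have : (size rs < size g)%N.
    apply: (max_poly_roots g0); first by apply/allP.
    rewrite map_inj_uniq ?iota_uniq // => x y E.
    wlog le: x y E / (x <= y)%N.
      by move=> W; case: (leqP x y) => h; [|apply/esym]; apply: W => //; apply: ltnW.
    apply/eqP; rewrite eqn_leq le /=.
    have : ((y.+1 - x.+1)%:R == 0 :> K) by rewrite natrB // E subrr.
    by move/pcharf0P: hK => ->; rewrite subn_eq0.
  by rewrite size_map size_iota ltnn.
case/allPn => x /mapP [i _ ->] Hr; exists (i.+1)%:R; split => //.
by move/pcharf0P: hK => ->.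
Qed.

Lemma density (K : fieldType) (hK : [pchar K] =i pred0) (N m m2 : nat)
  (A : 'M[K]_(m, N)) (W : 'M[K]_(m2, N)) (f : {mpoly K[N]}) (v : 'rV_N) :
  (v <= A)%MS -> v != 0 -> ev f v != 0 ->
  (forall p : 'rV_N, (p <= A)%MS -> p != 0 -> ev f p != 0 -> (p <= W)%MS) ->
  (A <= W)%MS.
Proof.
move=> vA v0 fv H; apply/negPn/negP => /row_subPn [i nu].
set u := row i A in nu.
have vW := H v vA v0 fv.
have [g Hg] := line_poly f (fun j => v 0 j) (fun j => u 0 j).
have g0 : g != 0.
  apply/negP => /eqP g0; move/negP: fv; apply; apply/eqP.
  have := Hg 0; rewrite g0 horner0 /ev => E; rewrite [RHS]E.
  by apply: meval_eq => j; rewrite mul0r addr0.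
have [t [t0 gt]] := nonroot hK g0.
set p := v + t *: u.
have pA : (p <= A)%MS by rewrite addmx_sub // scalemx_sub // row_sub.
have pW : (p <= W)%MS.
  have [->|p0] := eqVneq p 0; first by rewrite sub0mx.
  apply: H => //; rewrite /ev; move: gt; rewrite Hg; congr (_ != _).
  by apply: meval_eq => j; rewrite !mxE.
have tuW : (t *: u <= W)%MS.
  have -> : t *: u = p - v by rewrite /p addrC addKr.
  by rewrite addmx_sub // eqmx_opp.
apply: (negP nu); have -> : u = t^-1 *: (t *: u) by rewrite scalerA mulVf // scale1r.
by rewrite scalemx_sub.
Qed.

Lemma rank_add_row (K : fieldType) (N : nat) (X : 'M[K]_N) (p : 'rV[K]_N) :
  ~~ (p <= X)%MS -> \rank (X + p)%MS = (\rank X).+1.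
Proof.
move=> pX.
have lt : (X < X + p)%MS by rewrite ltmxE addsmxSl /= addsmx_sub submx_refl /=.
have p0 : p != 0 by apply: contraNneq pX => ->; rewrite sub0mx.
have le := (mxrank_adds_leqif X p).1; rewrite rank_rV p0 addn1 in le.
by apply/eqP; rewrite eqn_leq le (rank_ltmx lt).
Qed.

Lemma key (K : fieldType) (n k r j : nat) (Lam : nat -> 'M[K]_(n.+1))
  (Q : 'M[K]_(n.+1)) (p : 'rV[K]_(n.+1)) (P : 'M[K]_(n.+1, n)) :
  (1 <= j <= r)%N -> \rank (Lam j) = k -> (0 < n - k)%N ->
  p != 0 -> (forall i, (1 <= i <= r)%N -> ~~ (p <= Lam i)%MS) ->
  proj_from p P ->
  SP (n - k - 1) r (fun i => Lam i *m P) ->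
  (Q :&: Lam j)%MS = 0 ->
  (forall i, (1 <= i <= r)%N -> i != j -> meets Q (Lam i)) ->
  (p <= Q + Lam j)%MS.
Proof.
move=> hj rj nk p0 hpi /eqmxP hP hSP QJ hQ.
apply/idPn => pn.
set M := (Q + p)%MS.
have rQJ : \rank (Q + Lam j)%MS = (\rank Q + k)%N.
  have := mxrank_sum_cap Q (Lam j); rewrite QJ mxrank0 rj; lia.
have rMJ : \rank (M + Lam j)%MS = (\rank Q + k).+1.
  have -> : (M + Lam j)%MS = ((Q + Lam j) + p)%MS.
    by rewrite /M -!addsmxA [(p + _)%MS]addsmxC.
  by rewrite rank_add_row // rQJ.
have rM : (\rank M <= (\rank Q).+1)%N.
  by have := (mxrank_adds_leqif Q p).1; rewrite rank_rV p0 addn1.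
have MJ : (M :&: Lam j)%MS = 0.
  apply/eqP; rewrite -mxrank_eq0; apply/eqP.
  have := mxrank_sum_cap M (Lam j); rewrite rMJ rj; lia.
set C := ((M + Lam j)%MS)^C%MS.
set M' := (M + C)%MS.
have rC : \rank C = (n.+1 - \rank (M + Lam j)%MS)%N by rewrite mxrank_compl.
have rMJ' : \rank (M + Lam j)%MS = (\rank M + k)%N.
  have := mxrank_sum_cap M (Lam j); rewrite MJ mxrank0 rj; lia.
have rM'le : (\rank M' <= \rank M + \rank C)%N := (mxrank_adds_leqif M C).1.
have rM'J : \rank (M' + Lam j)%MS = n.+1.
  apply/eqP; rewrite eqn_leq rank_leq_col /=.
  have full := addsmx_compl_full (M + Lam j)%MS; rewrite /row_full in full.
  suff sub : ((M + Lam j) + C <= M' + Lam j)%MS by have := mxrankS sub; rewrite (eqP full).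
  rewrite -/C addsmx_sub; apply/andP; split.
    by rewrite addsmx_sub addsmxSr andbT (submx_trans (addsmxSl M C) (addsmxSl M' (Lam j))).
  exact: (submx_trans (addsmxSr M C) (addsmxSl M' (Lam j))).
have cap := mxrank_sum_cap M' (Lam j); rewrite rM'J rj in cap.
have colb := rank_leq_col (M + Lam j)%MS.
have rM' : \rank M' = (n.+1 - k)%N by lia.
have M'J : (M' :&: Lam j)%MS = 0.
  by apply/eqP; rewrite -mxrank_eq0; apply/eqP; lia.
have pM' : (p <= M')%MS := submx_trans (addsmxSr Q p) (addsmxSl M C).
have QM' : (Q <= M')%MS := submx_trans (addsmxSl Q p) (addsmxSl M C).
have kerp : forall x : 'rV_(n.+1), (x *m P = 0) -> (x <= p)%MS.
  by move=> x /sub_kermxP; rewrite hP.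
set N := <<M' *m P>>%MS.
have rN : \rank N = (n - k - 1).+1.
  rewrite genmxE; have := mxrank_mul_ker M' P.
  rewrite (cap_eqmx (eqmx_refl M') hP) (capmx_idPr pM') rank_rV p0 rM'; lia.
have := hSP j hj N rN.
have meetsJ : meets N (Lam j *m P) -> False.
  move=> /rowV0Pn [y]; rewrite sub_capmx => /andP [yN yJ] y0.
  move: yN; rewrite genmxE => /submxP [E yE].
  move/submxP: yJ => [D yD].
  set la := D *m Lam j.
  have laM' : (la <= M')%MS.
    have : ((la - E *m M') *m P = 0) by rewrite mulmxBl /la -!mulmxA -yD -yE subrr.
    move/kerp => h; have -> : la = (la - E *m M') + E *m M' by rewrite subrK.
    by rewrite addmx_sub // ?submxMl // (submx_trans h pM').
  have : (la <= M' :&: Lam j)%MS by rewrite sub_capmx laM' submxMl.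
  rewrite M'J submx0 => /eqP la0.
  by move/negP: y0; apply; rewrite yD mulmxA -/la la0 mul0mx.
move=> H; apply: meetsJ; apply: H => i hi hij.
have [v] := rowV0Pn (hQ i hi hij).
rewrite sub_capmx => /andP [vQ vi] v0.
apply/rowV0Pn; exists (v *m P).
  rewrite sub_capmx genmxE !submxMr //; exact: submx_trans vQ QM'.
apply/eqP => vP0; have vp := kerp _ vP0.
have := mxrank_leqif_sup vp; rewrite !rank_rV v0 p0 => /leqif_refl pv.
by move/negP: (hpi i hi); apply; apply: submx_trans pv vi.
Qed.

Unset Implicit Arguments.
Set Strict Implicit.

Theorem lemma2p14 (K : closedFieldType) (hK : [pchar K] =i pred0)
  (n k d r : nat) (Lam : nat -> 'M[K]_(n.+1))
  (hk : (1 <= k <= n)%N)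
  (hdim : forall i, (1 <= i <= d)%N -> \rank (Lam i) = k)
  (hSP : SP (n - k) d Lam)
  (hr : (2 <= r <= minn (d - 2) (n - k + 1))%N)
  (hgen : general_in (Lam d) (fun p =>
      (forall i, (1 <= i <= r)%N -> ~~ (p <= Lam i)%MS) /\
      exists P : 'M[K]_(n.+1, n), proj_from p P /\
        SP (n - k - 1) r (fun i => Lam i *m P))) :
  (Lam d <= \sum_(1 <= i < r.+1) Lam i)%MS \/ SP (n - k) r Lam.
Proof.
move: hr; rewrite leq_min => /and3P [h2 h3 h4].
set S := (\sum_(1 <= i < r.+1) Lam i)%MS.
have LS : forall i, (1 <= i <= r)%N -> (Lam i <= S)%MS.
  move=> i hi; rewrite /S (bigD1_seq i) ?iota_uniq //= ?addsmxSl //.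
  by rewrite mem_index_iota; lia.
have [hA|hA] := boolP (Lam d <= S)%MS; [by left | right].
move=> j hj L rL hmeet; apply/negP => /eqP Lj0.
move/negP: hA; apply.
set Q := (L :&: S)%MS.
have QJ : (Q :&: Lam j)%MS = 0.
  apply/eqP; rewrite -submx0 -Lj0; apply: capmxS => //; exact: capmxSl.
have hQ : forall i, (1 <= i <= r)%N -> i != j -> meets Q (Lam i).
  move=> i hi hij; have [v] := rowV0Pn (hmeet i hi hij).
  rewrite sub_capmx => /andP [vL vi] v0; apply/rowV0Pn; exists v => //.
  by rewrite !sub_capmx vL vi (submx_trans vi (LS i hi)).
have [dg [f [_ [[v [vA [v0 fv]]] Hq]]]] := hgen.
have QJS : (Q + Lam j <= S)%MS by rewrite addsmx_sub capmxSr LS.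
apply: submx_trans QJS; apply: (density hK vA v0 fv) => p pA p0 fp.
have [hpi [P [hP hSP']]] := Hq p pA p0 fp.
apply: (key (k := k) hj _ _ p0 hpi hP) => //.
  by apply: hdim; lia.
lia.
Qed.
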